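(* Let $G$ be a graph, $X\subseteq V(G)$ with $F:=G-X$ a pseudoforest, and $k$ an integer. Assume that: (1) there is no $v\in X$ with $\mathrm{Conf}_F(\{v\})\ge |X|$; (2) there are no distinct non-adjacent $u,v\in X$ with $\mathrm{Conf}_F(\{u,v\})\ge|X|$; (3) for all distinct $u,v,w\in X$ such that $\{u,v,w\}$ is independent in $G$ and $\mathrm{Conf}_F(\{u,v,w\})\ge|X|$, there is an anchor triangle $P$ with $N_G(V(P))=\{u,v,w\}$; (4) there is no connected component $P$ of $F$ which is not a non-redundant anchor triangle and satisfies $\mathrm{Conf}_P(X')=0$ for every chunk $X'$. Then the number of connected components of $F$ is at most $|X|^4+|X|^3$.
   Context: All graphs are finite, simple and undirected; a pseudoforest is a graph each of whose connected components contains at most one cycle. $\alpha(H)$ is the independence number of $H$. For a subgraph $F'\subseteq F$ and $X'\subseteq X$, $\mathrm{Conf}_{F'}(X') := \alpha(F') - \alpha(F' - N_G(X'))$, where $N_G(S)$ is the set of vertices outside $S$ adjacent to some vertex of $S$. A chunk is a set $X'\subseteq X$ that is independent in $G$, satisfies $1\le |X'|\le 3$, and has $\mathrm{Conf}_F(X') < |X|$. An anchor triangle is a connected component $P$ of $F$ with $V(P)=\{p_1,p_2,p_3\}$ such that there are vertices $x_1,x_2,x_3\in X$ with $N_G(p_1)=\{p_2,p_3,x_1\}$, $N_G(p_2)=\{p_1,p_3,x_2\}$, $N_G(p_3)=\{p_1,p_2,x_3\}$; it is non-redundant if no other anchor triangle has the same open neighborhood in $G$. *)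

(* Defs.v *)
From mathcomp Require Import all_boot.
Set Implicit Arguments. Unset Strict Implicit. Unset Printing Implicit Defensive.

(* A simple graph G on a finite vertex type T is a symmetric irreflexive
   relation e.  All subgraphs considered (F = G - X, its components, and
   F' - N_G(X')) are induced subgraphs, so they are given by vertex sets. *)
Section Defs.
Variables (T : finType) (e : rel T).

Definition nbhd (v : T) : {set T} := [set y | e v y].

Definition NG (S : {set T}) : {set T} :=
  [set y | (y \notin S) && [exists x in S, e x y]].

Definition indep (I : {set T}) : bool :=
  [forall x in I, forall y in I, ~~ e x y].

Definition alpha (S : {set T}) : nat :=
  \max_(I : {set T} | (I \subset S) && indep I) #|I|.

Definition conf (S X' : {set T}) : nat := alpha S - alpha (S :\: NG X').

Definition Frel (X : {set T}) : rel T :=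
  [rel x y | e x y && (x \notin X) && (y \notin X)].

Definition VF (X : {set T}) : {set T} := ~: X.

Definition comps (X : {set T}) : {set {set T}} :=
  [set [set y | connect (Frel X) x y] | x in ~: X].

(* a cycle of a graph with edge relation r: a duplicate-free closed walk
   of length >= 3; it is identified by its edge set (unordered pairs stored
   in both orientations) *)
Definition is_cycle (r : rel T) (s : seq T) : bool :=
  [&& uniq s, 2 < size s & cycle r s].

Definition cycle_edges (s : seq T) : {set T * T} :=
  [set p | (p.1 \in s) && (p.2 \in s) &&
           ((p.2 == next s p.1) || (p.1 == next s p.2))].

(* pseudoforest: each connected component contains at most one cycle, i.e.
   any two cycles lying in the same component are the same cycle *)
Definition pseudoforest (X : {set T}) : Prop :=
  forall s1 s2 : seq T, is_cycle (Frel X) s1 -> is_cycle (Frel X) s2 ->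
  forall x1 x2, x1 \in s1 -> x2 \in s2 -> connect (Frel X) x1 x2 ->
  cycle_edges s1 = cycle_edges s2.

Definition anchor (X P : {set T}) : Prop :=
  P \in comps X /\
  exists p1 p2 p3 x1 x2 x3,
    [/\ P = [set p1; p2; p3], #|P| = 3,
        [/\ x1 \in X, x2 \in X & x3 \in X] &
        [/\ nbhd p1 = [set p2; p3; x1],
            nbhd p2 = [set p1; p3; x2] &
            nbhd p3 = [set p1; p2; x3]]].

Definition nonredundant_anchor (X P : {set T}) : Prop :=
  anchor X P /\ forall Q, anchor X Q -> Q <> P -> NG Q <> NG P.

Definition chunk (X X' : {set T}) : Prop :=
  [/\ X' \subset X, indep X', 1 <= #|X'| <= 3 & conf (VF X) X' < #|X|].

End Defs.

(* Main.v *)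
Require Import Defs.
From mathcomp Require Import all_boot zify.
From Stdlib Require Import Classical.
Set Implicit Arguments. Unset Strict Implicit. Unset Printing Implicit Defensive.

Section H.
Variables (T : finType) (e : rel T).
Hypothesis esymm : symmetric e.

Lemma indep_sub (I J : {set T}) : I \subset J -> indep e J -> indep e I.
Proof.
move=> /subsetP IJ /forallP H; apply/forallP => x; apply/implyP => xI.
apply/forallP => y; apply/implyP => yI.
by move/implyP: (H x) => /(_ (IJ _ xI)) /forallP /(_ y) /implyP /(_ (IJ _ yI)).
Qed.

Lemma alpha_ub (S I : {set T}) : I \subset S -> indep e I -> #|I| <= alpha e S.
Proof.
move=> IS iI; rewrite /alpha.
by apply: (leq_bigmax_cond (F := fun I : {set T} => #|I|)); rewrite IS iI.
Qed.

Lemma alpha_le (S : {set T}) k : (forall I : {set T}, I \subset S -> indep e I -> #|I| <= k) -> alpha e S <= k.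
Proof. by move=> H; apply/bigmax_leqP => I /andP[]; apply: H. Qed.

Lemma indep0 : indep e set0.
Proof. by apply/forallP => x; rewrite inE. Qed.

Lemma alpha_ex (S : {set T}) : exists2 I : {set T}, (I \subset S) && indep e I & alpha e S = #|I|.
Proof.
have : 0 < #|[pred I : {set T} | (I \subset S) && indep e I]|.
  by apply/card_gt0P; exists set0; rewrite inE sub0set indep0.
move=> /(eq_bigmax_cond (fun I : {set T} => #|I|)) [I HI HE].
by exists I => //; rewrite /alpha -HE.
Qed.

Lemma alpha_mono (S S' : {set T}) : S \subset S' -> alpha e S <= alpha e S'.
Proof.
move=> SS'; apply: alpha_le => I IS iI; apply: alpha_ub iI.
exact: subset_trans SS'.
Qed.

Definition sep (A B : {set T}) :=
  forall x y, x \in A -> y \in B -> (x != y) && ~~ e x y.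

Lemma alphaU (A B : {set T}) : sep A B -> alpha e (A :|: B) = alpha e A + alpha e B.
Proof.
move=> sAB; apply/eqP; rewrite eqn_leq; apply/andP; split.
  apply: alpha_le => I IS iI.
  have -> : I = (I :&: A) :|: (I :&: B) by rewrite -setIUr; apply/esym/setIidPl.
  apply: leq_trans (leq_add (alpha_ub (subsetIr _ _) (indep_sub (subsetIl _ _) iI))
                            (alpha_ub (subsetIr _ _) (indep_sub (subsetIl _ _) iI))).
  by rewrite -cardsUI leq_addr.
case: (alpha_ex A) => IA /andP[IAs IAi] ->.
case: (alpha_ex B) => IB /andP[IBs IBi] ->.
have dis : IA :&: IB = set0.
  apply/setP => x; rewrite !inE; apply/negP => /andP[xa xb].
  by move: (sAB x x (subsetP IAs _ xa) (subsetP IBs _ xb)); rewrite eqxx.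
rewrite -cardsUI dis cards0 addn0; apply: alpha_ub; first exact: setUSS.
apply/forallP => x; apply/implyP => xI; apply/forallP => y; apply/implyP => yI.
move: xI yI; rewrite !inE => /orP[xa|xb] /orP[ya|yb].
- by move/forallP: IAi => /(_ x) /implyP /(_ xa) /forallP /(_ y) /implyP /(_ ya).
- by case/andP: (sAB x y (subsetP IAs _ xa) (subsetP IBs _ yb)).
- by case/andP: (sAB y x (subsetP IAs _ ya) (subsetP IBs _ xb)); rewrite esymm.
- by move/forallP: IBi => /(_ x) /implyP /(_ xb) /forallP /(_ y) /implyP /(_ yb).
Qed.

Lemma confU (A B X' : {set T}) : sep A B -> conf e (A :|: B) X' = conf e A X' + conf e B X'.
Proof.
move=> sAB; rewrite /conf setDUl alphaU // alphaU; last first.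
  by move=> x y; rewrite !inE => /andP[_ xa] /andP[_ yb]; apply: sAB.
have h1 := alpha_mono (subsetDl A (NG e X')).
have h2 := alpha_mono (subsetDl B (NG e X')).
lia.
Qed.

Lemma card_bigcup_le (I : finType) (P : pred I) (F : I -> {set T}) :
  #|\bigcup_(i | P i) F i| <= \sum_(i | P i) #|F i|.
Proof.
apply: (big_ind2 (fun (A : {set T}) n => #|A| <= n)); first by rewrite cards0.
  move=> A1 n1 A2 n2 h1 h2; apply: leq_trans (leq_add h1 h2).
  by rewrite -cardsUI leq_addr.
by [].
Qed.

End H.

Section C.
Variables (T : finType) (e : rel T) (X : {set T}).
Hypothesis esymm : symmetric e.
Local Notation r := (Frel e X).

Lemma Frel_sym : symmetric r.
Proof. by move=> x y; rewrite /Frel /= esymm; case: (x \in X); case: (y \in X); rewrite /= ?andbF. Qed.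

Lemma csym : connect_sym r.
Proof. exact: sym_connect_sym Frel_sym. Qed.

Lemma comp_sub P : P \in comps e X -> P \subset ~: X.
Proof.
case/imsetP => a aX ->; apply/subsetP => y; rewrite inE.
rewrite csym => /connectP [[|z p] /= pth]; first by move=> <-.
by case/andP: pth => /andP[/andP[_ h] _] _ _; rewrite inE.
Qed.

Lemma comp_mem P x : P \in comps e X -> x \in P -> P = [set y | connect r x y].
Proof.
case/imsetP => a _ -> ; rewrite inE => ax; apply/setP => y; rewrite !inE.
apply/idP/idP => h; first by apply: connect_trans h; rewrite csym.
exact: connect_trans ax h.
Qed.

Lemma comps_sep P Q : P \in comps e X -> Q \in comps e X -> P != Q -> sep e P Q.
Proof.
move=> PC QC PQ x y xP yQ; case: (boolP ((x != y) && ~~ e x y)) => // H.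
suff PeQ : P = Q by rewrite PeQ eqxx in PQ.
have cxy : connect r x y.
  move: H; rewrite negb_and !negbK => /orP[/eqP->|exy]; first exact: connect0.
  apply: connect1; rewrite /Frel /= exy.
  by rewrite -!in_setC (subsetP (comp_sub PC) _ xP) (subsetP (comp_sub QC) _ yQ).
rewrite (comp_mem PC xP) (comp_mem QC yQ); apply/setP => z; rewrite !inE.
apply/idP/idP => h; first by apply: connect_trans h; rewrite csym.
exact: connect_trans cxy h.
Qed.

Lemma comps_cover : \bigcup_(P in comps e X) P = VF X.
Proof.
apply/setP => x; apply/bigcupP/idP.
  by case=> P PC xP; exact: (subsetP (comp_sub PC)).
move=> xX; exists [set y | connect r x y]; first by apply/imsetP; exists x.
by rewrite inE connect0.
Qed.

Lemma conf_sum (D : {set {set T}}) (X' : {set T}) : D \subset comps e X ->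
  conf e (\bigcup_(P in D) P) X' = \sum_(P in D) conf e P X'.
Proof.
elim: {D}_.+1 {-2}D (ltnSn #|D|) => // m IH D Dm DC.
case: (set_0Vmem D) => [->|[P PD]].
  by rewrite big_set0 big_set0 /conf set0D subnn.
rewrite (big_setD1 P PD) (big_setD1 P PD) /= confU // ?IH //.
- by move: Dm; rewrite (cardsD1 P) PD.
- exact: subset_trans (subsetDl _ _) DC.
- move=> x y xP /bigcupP [Q]; rewrite !inE => /andP[QP QD] yQ.
  apply: (comps_sep (subsetP DC _ PD) (subsetP DC _ QD)) => //.
  by rewrite eq_sym.
Qed.

End C.

Section M.
Variable T : finType.

Lemma three_eq (Y : {set T}) a b c : a \in Y -> b \in Y -> c \in Y ->
  Y :\ a :\ b :\ c = set0 -> Y = [set a; b; c].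
Proof.
move=> aY bY cY /setP E; apply/setP => y; rewrite !inE.
apply/idP/idP => [yY|].
  move: (E y); rewrite !inE yY andbT.
  by case: (y == a); case: (y == b); case: (y == c).
by case/orP => [/orP[]|] /eqP ->.
Qed.

Lemma small_sets (X : {set T}) :
  #|[set Y : {set T} | (Y \subset X) && (0 < #|Y| <= 3)]| <= #|X| ^ 3.
Proof.
pose f (t : T * (T * T)) := [set t.1; t.2.1; t.2.2].
apply: (@leq_trans #|f @: setX X (setX X X)|); last first.
  by apply: leq_trans (leq_imset_card _ _) _; rewrite !cardsX expnS expnS expn1.
apply: subset_leq_card; apply/subsetP => Y; rewrite inE => /andP[YX /andP[Y0 Y3]].
have [a aY] : exists a, a \in Y by apply/card_gt0P.
have sub3 : forall b c, b \in Y -> c \in Y -> Y :\ a :\ b :\ c = set0 ->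
    Y \in f @: setX X (setX X X).
  move=> b c bY cY E; apply/imsetP; exists (a, (b, c)).
    by rewrite !inE /= !(subsetP YX).
  exact: three_eq.
case: (set_0Vmem (Y :\ a)) => [E1|[b]].
  by apply: (sub3 a a) => //; rewrite E1 !set0D.
rewrite !inE => /andP[ba bY].
case: (set_0Vmem (Y :\ a :\ b)) => [E2|[c]].
  by apply: (sub3 b b) => //; rewrite E2 set0D.
rewrite !inE => /andP[cb /andP[ca cY]].
apply: (sub3 b c) => //; apply/eqP; rewrite -cards_eq0.
have h1 : a \in Y by [].
have h2 : b \in Y :\ a by rewrite !inE ba bY.
have h3 : c \in Y :\ a :\ b by rewrite !inE cb ca cY.
move: Y3; rewrite (cardsD1 a Y) h1 (cardsD1 b (Y :\ a)) h2 (cardsD1 c (Y :\ a :\ b)) h3.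
move=> h; apply/eqP; lia.
Qed.
End M.

Section M2.
Variables (T : finType) (e : rel T) (X : {set T}).
Hypothesis esymm : symmetric e.

Definition S3 := [set Y : {set T} | (Y \subset X) && (0 < #|Y| <= 3)].

Lemma anchor_NG P : anchor e X P -> NG e P \in S3.
Proof.
case=> PC [p1 [p2 [p3 [x1 [x2 [x3 [Pe _ [x1X x2X x3X] [n1 n2 n3]]]]]]]].
have PX := comp_sub esymm PC.
have sub : NG e P \subset [set x1; x2; x3].
  apply/subsetP => y; rewrite inE => /andP[yP /existsP [x /andP[xP exy]]].
  have : y \in nbhd e x by rewrite inE.
  rewrite Pe !inE in yP; rewrite Pe !inE in xP.
  case/orP: xP => [/orP[]|] /eqP xe; subst x;
    rewrite ?n1 ?n2 ?n3 !inE; move: yP;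
    by case: (y == p1); case: (y == p2); case: (y == p3); case: (y == x1);
       case: (y == x2); case: (y == x3).
have x1N : x1 \in NG e P.
  rewrite inE; apply/andP; split.
    by apply/negP => /(subsetP PX); rewrite inE x1X.
  apply/existsP; exists p1; rewrite Pe !inE eqxx /=.
  have : x1 \in nbhd e p1 by rewrite n1 !inE eqxx orbT.
  by rewrite inE.
rewrite inE; apply/andP; split.
  apply: subset_trans sub _; apply/subsetP => y; rewrite !inE.
  by case/orP => [/orP[]|] /eqP ->.
apply/andP; split; first by apply/card_gt0P; exists x1.
apply: leq_trans (subset_leq_card sub) _.
have H : forall A B : {set T}, #|A :|: B| <= #|A| + #|B|.
  by move=> A B; rewrite -cardsUI leq_addr.
apply: leq_trans (H _ _) _; rewrite cards1 addn1 ltnS cardsU1 cards1.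
by case: (x1 \notin _).
Qed.

End M2.

Theorem lemma6 (T : finType) (e : rel T) (X : {set T}) :
  symmetric e -> irreflexive e ->
  pseudoforest e X ->
  (* (1) *)
  (forall v, v \in X -> conf e (VF X) [set v] < #|X|) ->
  (* (2) *)
  (forall u v, u \in X -> v \in X -> u != v -> ~~ e u v ->
     conf e (VF X) [set u; v] < #|X|) ->
  (* (3) *)
  (forall u v w, u \in X -> v \in X -> w \in X ->
     u != v -> u != w -> v != w -> indep e [set u; v; w] ->
     #|X| <= conf e (VF X) [set u; v; w] ->
     exists P, anchor e X P /\ NG e P = [set u; v; w]) ->
  (* (4) *)
  ~ (exists P, P \in comps e X /\ ~ nonredundant_anchor e X P /\
       forall X', chunk e X X' -> conf e P X' = 0) ->
  #|comps e X| <= #|X| ^ 4 + #|X| ^ 3.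
Proof.
move=> esymm _ _ _ _ _ H4.
set n := #|X|; set C := comps e X.
pose chunkb (Y : {set T}) :=
  [&& Y \subset X, indep e Y, 0 < #|Y| <= 3 & conf e (VF X) Y < n].
have chunkP Y : chunk e X Y -> chunkb Y.
  by case=> h1 h2 h3 h4; rewrite /chunkb h1 h2 h3 h4.
pose B := [set P in C | [exists Y, chunkb Y && (0 < conf e P Y)]].
pose G := C :\: B.
have BC : B \subset C by apply/subsetP => P; rewrite inE => /andP[].
have eC : #|C| = #|B| + #|G| by rewrite -(cardsID B C) (setIidPr BC).
have hB : #|B| <= #|S3 X| * n.
  have sub : B \subset \bigcup_(Y | chunkb Y) [set P in C | 0 < conf e P Y].
    apply/subsetP => P; rewrite inE => /andP[PC /existsP [Y /andP[cY cP]]].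
    by apply/bigcupP; exists Y => //; rewrite inE PC.
  apply: leq_trans (subset_leq_card sub) _.
  apply: leq_trans (card_bigcup_le _ _) _.
  rewrite -sum_nat_const big_mkcond [X in _ <= X]big_mkcond /=.
  apply: leq_sum => Y _.
  case: (boolP (chunkb Y)) => // cY.
  have cY' := cY; case/and4P: cY' => YX _ Y3 Yn.
  rewrite inE YX Y3.
  apply: leq_trans (ltnW Yn).
  have -> : VF X = \bigcup_(P in C) P by rewrite comps_cover.
  rewrite (conf_sum (X := X)) //.
  set A := [set P in C | 0 < conf e P Y].
  have AC : A \subset C by apply/subsetP => P; rewrite inE => /andP[].
  rewrite (big_setID A) /= (setIidPr AC).
  apply: leq_trans (leq_addr _ _).
  rewrite -sum1_card; apply: leq_sum => P; rewrite inE => /andP[].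
  by [].
have GNRA P : P \in G -> nonredundant_anchor e X P.
  rewrite inE => /andP[PB PC].
  apply: NNPP => nP; apply: H4; exists P; split => //; split => //.
  move=> Y /chunkP cY; apply/eqP; rewrite eqn0Ngt.
  apply/negP => cP; move/negP: PB; apply.
  by rewrite inE PC /=; apply/existsP; exists Y; rewrite cY cP.
have hG : #|G| <= #|S3 X|.
  rewrite -(card_in_imset (f := NG e) (D := G)).
    apply: subset_leq_card; apply/subsetP => Y /imsetP [P PG ->].
    by apply: anchor_NG => //; case: (GNRA P PG).
  move=> P Q PG QG EPQ; apply: NNPP => PQ.
  by case: (GNRA P PG) => _ /(_ Q (proj1 (GNRA Q QG))) /(_ (nesym PQ)) /(_ (esym EPQ)).
have h3 := small_sets X.
rewrite eC; apply: leq_trans (leq_add hB hG) _.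
rewrite -/n in h3.
have -> : n ^ 4 = n ^ 3 * n by rewrite -expnSr.
by apply: leq_add => //; rewrite leq_mul2r h3 orbT.
Qed.
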